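(* Fix a $C^0$-concept over $\mathbb{K}$. Let $E,F\in\mathcal{M}$, $U\subseteq E$ open and $f\colon U\to F$ of class $C^2$. Then for all $v,w\in E$, $\partial_v\partial_wf=\partial_w\partial_vf$ on $U$.
   Context: Let $\mathbb{K}$ be a commutative ring with unit carrying a topology. A $C^0$-concept over $\mathbb{K}$ consists of: (a) a class $\mathcal{M}$ of topologized $\mathbb{K}$-modules with $\mathbb{K}\in\mathcal{M}$; (b) for $E,F\in\mathcal{M}$ and open $U\subseteq E$, a set $C^0(U,F)$ of continuous maps; (c) for $E_1,E_2\in\mathcal{M}$ a topology on $E_1\times E_2$ (not necessarily the product topology) making it a member of $\mathcal{M}$; subject to: (I.1) composites of $C^0$-maps are $C^0$, identities and inclusions of open subsets are $C^0$; (I.2) $x\mapsto rx+b$ is $C^0$; (I.3) $t\mapsto tv+x$ is $C^0$; (I.4) $\mathbb{K}^\times$ is open and inversion is $C^0$; (I.5) $C^0$ is local on open covers; (II.1) projections and $v\mapsto(v,y)$, $w\mapsto(x,w)$ are $C^0$; (II.2) $f_1\times f_2$ is $C^0$ for $C^0$-maps $f_i$; (II.3) diagonals are $C^0$; (II.4) exchange/associativity maps of products are $C^0$ both ways; (II.5) addition and scalar multiplication are $C^0$; (III) a $C^0$-map on open $U\subseteq\mathbb{K}$ is determined by its values on $U\cap\mathbb{K}^\times$. For open $V\subseteq X$, $V^{[1]}=\{(x,v,t)\in V\times X\times\mathbb{K}:x+tv\in V\}$; a $C^0$-map $g$ is $C^1$ if there is a $C^0$-map $g^{[1]}$ on $V^{[1]}$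 with $g(x+tv)-g(x)=t\,g^{[1]}(x,v,t)$; $g$ is $C^2$ if moreover $g^{[1]}$ is $C^1$. For $g$ of class $C^1$, $\partial_vg(x):=g^{[1]}(x,v,0)$; if $g$ is $C^2$, then $\partial_wg=g^{[1]}(\cdot,w,0)$ is $C^1$, so $\partial_v\partial_wg$ is defined. *)

(* Defs.v *)
From HB Require Import structures.
From mathcomp Require Import all_boot all_order all_algebra.
From mathcomp Require Import boolp classical_sets.
Set Implicit Arguments.
Unset Strict Implicit.
Unset Printing Implicit Defensive.
Import GRing.Theory.
Local Open Scope ring_scope.
Local Open Scope classical_set_scope.

Definition is_topology (T : Type) (op : set T -> Prop) : Prop :=
  [/\ op setT, op set0,
      (forall A B, op A -> op B -> op (A `&` B)) &
      (forall (I : Type) (F : I -> set T), (forall i, op (F i)) ->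
         op (\bigcup_(i in setT) F i))].

Definition cont_on (T S : Type) (opT : set T -> Prop) (opS : set S -> Prop)
  (U : set T) (f : T -> S) : Prop :=
  forall W, opS W -> opT (U `&` f @^-1` W).

Record tmod (K : comUnitRingType) := TMod {
  tcar :> lmodType K;
  topen : set tcar -> Prop }.

Definition Kmod (K : comUnitRingType) (Kopen : set K -> Prop) : tmod K :=
  @TMod K K^o Kopen.

(* The product E1 x E2 (product module) with the topology chosen by the
   C^0-concept (not necessarily the product topology). *)
Definition pmod (K : comUnitRingType)
  (ptop : forall E1 E2 : tmod K, set (tcar E1 * tcar E2)%type -> Prop)
  (E1 E2 : tmod K) : tmod K :=
  @TMod K (tcar E1 * tcar E2)%type (ptop E1 E2).

(* Axioms of a C^0-concept over K.
   - M : the class of topologized modules;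
   - C0 E F U f : f (a total function E -> F, of which only the restriction
     to U matters) belongs to C^0(U,F);  U is required to be open.
   - ptop E1 E2 : the topology on E1 x E2. *)
Record C0_concept (K : comUnitRingType) (Kopen : set K -> Prop)
  (M : tmod K -> Prop)
  (C0 : forall E F : tmod K, set (tcar E) -> (tcar E -> tcar F) -> Prop)
  (ptop : forall E1 E2 : tmod K, set (tcar E1 * tcar E2)%type -> Prop) : Prop :=
{
  c_Ktop : is_topology Kopen;
  c_KM : M (Kmod Kopen);
  c_top : forall E, M E -> is_topology (@topen K E);
  c_prodM : forall E1 E2, M E1 -> M E2 -> M (pmod ptop E1 E2);
  c_open : forall E F U f, M E -> M F -> C0 E F U f -> topen U;
  c_cont : forall E F U f, M E -> M F -> C0 E F U f ->
             cont_on (@topen K E) (@topen K F) U f;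
  c_ext : forall E F U (f g : tcar E -> tcar F), M E -> M F -> C0 E F U f ->
             (forall x, U x -> f x = g x) -> C0 E F U g;
  c_comp : forall E F G U V f g, M E -> M F -> M G ->
             C0 E F U f -> C0 F G V g -> (forall x, U x -> V (f x)) ->
             C0 E G U (g \o f);
  c_id : forall E U, M E -> topen U -> C0 E E U id;
  c_affine : forall E (r : K) (b : tcar E), M E ->
             C0 E E setT (fun x => r *: x + b);
  c_line : forall E (v x : tcar E), M E ->
             C0 (Kmod Kopen) E setT (fun t : K => t *: v + x);
  c_units_open : Kopen [set t : K | t \is a GRing.unit];
  c_inv : C0 (Kmod Kopen) (Kmod Kopen) [set t : K | t \is a GRing.unit]
             (fun t : K => t^-1);
  c_local : forall E F U (f : tcar E -> tcar F) (I : Type) (Ui : I -> set (tcar E)),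
             M E -> M F -> topen U -> (forall i, topen (Ui i)) ->
             U = \bigcup_(i in setT) Ui i -> (forall i, C0 E F (Ui i) f) ->
             C0 E F U f;
  c_fst : forall E1 E2, M E1 -> M E2 ->
             C0 (pmod ptop E1 E2) E1 setT fst;
  c_snd : forall E1 E2, M E1 -> M E2 ->
             C0 (pmod ptop E1 E2) E2 setT snd;
  c_inl : forall E1 E2 (y : tcar E2), M E1 -> M E2 ->
             C0 E1 (pmod ptop E1 E2) setT (fun v => (v, y));
  c_inr : forall E1 E2 (x : tcar E1), M E1 -> M E2 ->
             C0 E2 (pmod ptop E1 E2) setT (fun w => (x, w));
  c_prodmap : forall E1 E2 F1 F2 U1 U2 f1 f2,
             M E1 -> M E2 -> M F1 -> M F2 ->
             C0 E1 F1 U1 f1 -> C0 E2 F2 U2 f2 ->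
             C0 (pmod ptop E1 E2) (pmod ptop F1 F2)
                [set p | U1 p.1 /\ U2 p.2] (fun p => (f1 p.1, f2 p.2));
  c_diag : forall E, M E -> C0 E (pmod ptop E E) setT (fun x => (x, x));
  c_swap : forall E1 E2, M E1 -> M E2 ->
             C0 (pmod ptop E1 E2) (pmod ptop E2 E1) setT (fun p => (p.2, p.1));
  c_assoc : forall E1 E2 E3, M E1 -> M E2 -> M E3 ->
             C0 (pmod ptop (pmod ptop E1 E2) E3) (pmod ptop E1 (pmod ptop E2 E3))
                setT (fun p => (p.1.1, (p.1.2, p.2)));
  c_assocV : forall E1 E2 E3, M E1 -> M E2 -> M E3 ->
             C0 (pmod ptop E1 (pmod ptop E2 E3)) (pmod ptop (pmod ptop E1 E2) E3)
                setT (fun p => ((p.1, p.2.1), p.2.2));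
  c_add : forall E, M E ->
             C0 (pmod ptop E E) E setT (fun p => p.1 + p.2);
  c_scale : forall E, M E ->
             C0 (pmod ptop (Kmod Kopen) E) E setT (fun p => (p.1 : K) *: p.2);
  c_dense : forall F U (f g : K -> tcar F), M F -> Kopen U ->
             C0 (Kmod Kopen) F U f -> C0 (Kmod Kopen) F U g ->
             (forall t, U t -> t \is a GRing.unit -> f t = g t) ->
             forall t, U t -> f t = g t
}.

Unset Implicit Arguments.

(* X x X x K, with triples (x,v,t) encoded as ((x,v),t) *)
Definition XXK (K : comUnitRingType) (Kopen : set K -> Prop)
  (ptop : forall E1 E2 : tmod K, set (tcar E1 * tcar E2)%type -> Prop)
  (X : tmod K) : tmod K :=
  pmod ptop (pmod ptop X X) (Kmod Kopen).

Definition V1 (K : comUnitRingType) (Kopen : set K -> Prop)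
  (ptop : forall E1 E2 : tmod K, set (tcar E1 * tcar E2)%type -> Prop)
  (X : tmod K) (V : set (tcar X)) : set (tcar (XXK K Kopen ptop X)) :=
  [set p | V p.1.1 /\ V (p.1.1 + (p.2 : K) *: p.1.2)].

Definition is_dq (K : comUnitRingType) (Kopen : set K -> Prop)
  (C0 : forall E F : tmod K, set (tcar E) -> (tcar E -> tcar F) -> Prop)
  (ptop : forall E1 E2 : tmod K, set (tcar E1 * tcar E2)%type -> Prop)
  (X F : tmod K) (V : set (tcar X)) (g : tcar X -> tcar F)
  (g1 : tcar (XXK K Kopen ptop X) -> tcar F) : Prop :=
  C0 (XXK K Kopen ptop X) F (V1 K Kopen ptop X V) g1 /\
  forall p : tcar (XXK K Kopen ptop X), V1 K Kopen ptop X V p ->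
    g (p.1.1 + (p.2 : K) *: p.1.2) - g p.1.1 = (p.2 : K) *: g1 p.

Definition is_C1 (K : comUnitRingType) (Kopen : set K -> Prop)
  (C0 : forall E F : tmod K, set (tcar E) -> (tcar E -> tcar F) -> Prop)
  (ptop : forall E1 E2 : tmod K, set (tcar E1 * tcar E2)%type -> Prop)
  (X F : tmod K) (V : set (tcar X)) (g : tcar X -> tcar F) : Prop :=
  C0 X F V g /\ exists g1, is_dq K Kopen C0 ptop X F V g g1.

Definition pder (K : comUnitRingType) (Kopen : set K -> Prop)
  (ptop : forall E1 E2 : tmod K, set (tcar E1 * tcar E2)%type -> Prop)
  (X F : tmod K) (g1 : tcar (XXK K Kopen ptop X) -> tcar F) (v : tcar X) :
  tcar X -> tcar F := fun x => g1 ((x, v), (0 : K)).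

(* Main.v *)
Require Import Defs.
From HB Require Import structures.
From mathcomp Require Import all_boot all_order all_algebra.
From mathcomp Require Import boolp classical_sets.
Import GRing.Theory.
Local Open Scope ring_scope.
Local Open Scope classical_set_scope.

Lemma scale_pair (K : comUnitRingType) (V W : lmodType K) t (a:V) (b:W) :
  t *: ((a,b) : (V*W)%type) = (t*:a, t*:b).
Proof. by []. Qed.
Lemma add_pair (K : comUnitRingType) (V W : lmodType K) (a a':V) (b b':W) :
  ((a,b) : (V*W)%type) + (a',b') = (a+a', b+b').
Proof. by []. Qed.

Lemma scale_cancel (K : comUnitRingType) (V : lmodType K) (t : K) (a b : V) :
  t \is a GRing.unit -> t *: a = t *: b -> a = b.
Proof.
move=> Ht H.
by rewrite -[a]scale1r -(mulVr Ht) -scalerA H scalerA mulVr // scale1r.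
Qed.

Lemma sq_id (V : zmodType) (a b c d : V) : a - c - (b - d) = a - b - (c - d).
Proof. rewrite !opprB !addrA [LHS]addrAC [RHS]addrAC; congr (_ + _). by rewrite addrAC. Qed.

Lemma scaleKo (K : comUnitRingType) (t a : K) : t *: (a : K^o) = t * a.
Proof. by []. Qed.

Ltac simp := rewrite /= ?scale_pair ?add_pair ?scaler0 ?add0r ?addr0 ?scaleKo ?mulr1 ?mulr0 ?scale0r ?add0r ?addr0.

Section Helpers.
Context {K : comUnitRingType} {Kopen : set K -> Prop} {M : tmod K -> Prop}
  {C0 : forall E F : tmod K, set (tcar E) -> (tcar E -> tcar F) -> Prop}
  {ptop : forall E1 E2 : tmod K, set (tcar E1 * tcar E2)%type -> Prop}
  (HC : C0_concept Kopen M C0 ptop).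

Lemma line_open (X : tmod K) (e p : tcar X) (V : set (tcar X)) :
  M X -> topen V -> Kopen [set t : K | V (t *: e + p)].
Proof.
move=> MX HV.
have := c_cont HC (c_KM HC) MX (c_line HC e p MX) HV.
by rewrite setTI.
Qed.

Lemma line_C0 (X F : tmod K) (V : set (tcar X)) (g : tcar X -> tcar F)
  (D : set K) (e p : tcar X) :
  M X -> M F -> C0 X F V g -> Kopen D -> (forall t, D t -> V (t *: e + p)) ->
  C0 (Kmod Kopen) F D (fun t : K => g (t *: e + p)).
Proof.
move=> MX MF Hg HD HDV.
have Hl : C0 (Kmod Kopen) X D (fun t : K => t *: e + p).
  exact: (c_comp HC (c_KM HC) (c_KM HC) MX (c_id HC (c_KM HC) HD)
            (c_line HC e p MX) (fun _ _ => I)).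
exact: (c_comp HC (c_KM HC) MX MF Hl Hg HDV).
Qed.

Lemma Kopen_I (A B : set K) : Kopen A -> Kopen B -> Kopen (A `&` B).
Proof. by case: (c_Ktop HC) => _ _ HI _; apply: HI. Qed.

End Helpers.
Theorem lemma4p6 (K : comUnitRingType) (Kopen : set K -> Prop)
  (M : tmod K -> Prop)
  (C0 : forall E F : tmod K, set (tcar E) -> (tcar E -> tcar F) -> Prop)
  (ptop : forall E1 E2 : tmod K, set (tcar E1 * tcar E2)%type -> Prop)
  (HC : C0_concept Kopen M C0 ptop)
  (E F : tmod K) (HE : M E) (HF : M F)
  (U : set (tcar E)) (HU : topen U)
  (f : tcar E -> tcar F) (f1 : tcar (XXK K Kopen ptop E) -> tcar F)
  (Hf : C0 E F U f)
  (Hf1 : is_dq K Kopen C0 ptop E F U f f1)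
  (Hf1C1 : is_C1 K Kopen C0 ptop (XXK K Kopen ptop E) F
             (V1 K Kopen ptop E U) f1)
  (v w : tcar E) (hv hw : tcar (XXK K Kopen ptop E) -> tcar F)
  (Hhv : is_dq K Kopen C0 ptop E F U (pder K Kopen ptop E F f1 v) hv)
  (Hhw : is_dq K Kopen C0 ptop E F U (pder K Kopen ptop E F f1 w) hw) :
  forall x, U x ->
    pder K Kopen ptop E F hw v x = pder K Kopen ptop E F hv w x.
Proof.
move=> x Ux.
have MK := c_KM HC.
have MEE : M (pmod ptop E E) := c_prodM HC HE HE.
have MXE : M (XXK K Kopen ptop E) := c_prodM HC MEE MK.
have MXX : M (pmod ptop (XXK K Kopen ptop E) (XXK K Kopen ptop E)) :=
  c_prodM HC MXE MXE.
have MXXE : M (XXK K Kopen ptop (XXK K Kopen ptop E)) := c_prodM HC MXX MK.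
case: Hf1C1 => _ [f11 [Hf11c Hf11]].
case: Hf1 => _ Hf1e.
case: Hhv => Hhvc Hhve.
case: Hhw => Hhwc Hhwe.
pose G (s t : K) := f11 ((((x, v), s), ((w, 0), 0)), t).
pose H (s t : K) := f11 ((((x, w), t), ((v, 0), 0)), s).
have key : forall s t : K, s \is a GRing.unit -> t \is a GRing.unit ->
    U (x + s *: v) -> U (x + t *: w) -> U (x + s *: v + t *: w) ->
    G s t = H s t.
  move=> s t Hs Ht Us Ut Ust.
  apply: (@scale_cancel _ _ (s * t)); first by rewrite unitrM Hs Ht.
  have E1 := Hf11 ((((x, v), s), ((w, 0), 0)), t).
  have E2 := Hf11 ((((x, w), t), ((v, 0), 0)), s).
  rewrite /= !scale_pair !add_pair !scaler0 !addr0 in E1 E2.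
  have S1 : V1 K Kopen ptop E U (x, v, s) by split.
  have S2 : V1 K Kopen ptop E U (x, w, t) by split.
  have S3 : V1 K Kopen ptop E U (x + t *: w, v, s) by split; rewrite // addrAC.
  have S4 : V1 K Kopen ptop E U (x + s *: v, w, t) by split.
  have {}E1 : f1 (x + t *: w, v, s) - f1 (x, v, s) = t *: G s t.
    apply: E1; split; first exact: S1.
    by rewrite /= !scale_pair !add_pair !scaler0 !addr0.
  have {}E2 : f1 (x + s *: v, w, t) - f1 (x, w, t) = s *: H s t.
    apply: E2; split; first exact: S2.
    by rewrite /= !scale_pair !add_pair !scaler0 !addr0.
  have A := Hf1e _ S3. have B := Hf1e _ S1.
  have A' := Hf1e _ S4. have B' := Hf1e _ S2.
  rewrite /= in A B A' B'.
  rewrite -[in LHS]scalerA [in RHS]mulrC -scalerA -E1 -E2 !scalerBr.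
  rewrite -A -B -A' -B' (addrAC x).
  exact: sq_id.
pose D1 (s : K) := [set t : K | U (t *: w + x)] `&` [set t : K | U (t *: w + (x + s *: v))].
have D1o : forall s, Kopen (D1 s).
  move=> s; apply: (Kopen_I HC).
    exact: (line_open HC E w x U HE HU).
  exact: (line_open HC E w (x + s *: v) U HE HU).
have D2o : Kopen [set s : K | U (s *: v + x)] by exact: (line_open HC E v x U HE HU).
have G1c : forall s, U (x + s *: v) -> C0 (Kmod Kopen) F (D1 s) (G s).
  move=> s Us.
  have := @line_C0 _ _ _ _ _ HC _ _ _ _ (D1 s)
     ((0, 1) : tcar (XXK K Kopen ptop (XXK K Kopen ptop E)))
     ((((x, v), s), ((w, 0), 0)), 0) MXXE HF Hf11c (D1o s).
  move=> Hl; apply: (c_ext HC MK HF (Hl _)).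
    move=> t [Ht1 Ht2]; simp; split; split; simp => //.
      by rewrite addrC.
    by rewrite addrAC addrC.
  by move=> t _; simp.
have H1c : forall s, U (x + s *: v) -> C0 (Kmod Kopen) F (D1 s) (H s).
  move=> s Us.
  have := @line_C0 _ _ _ _ _ HC _ _ _ _ (D1 s)
     (((((0, 0), 1), 0), 0) : tcar (XXK K Kopen ptop (XXK K Kopen ptop E)))
     ((((x, w), 0), ((v, 0), 0)), s) MXXE HF Hf11c (D1o s).
  move=> Hl; apply: (c_ext HC MK HF (Hl _)).
    move=> t [Ht1 Ht2]; simp; split; split; simp => //; by rewrite addrC.

  by move=> t _; simp.
have S1 : forall s, s \is a GRing.unit -> U (x + s *: v) -> G s 0 = H s 0.
  move=> s Hs Us.
  apply: (c_dense HC HF (D1o s) (G1c s Us) (H1c s Us)).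
    move=> t [Ht1 Ht2] Ht; apply: key => //; rewrite addrC //.
  by split; rewrite /= scale0r add0r.
have G2c : C0 (Kmod Kopen) F [set s | U (s *: v + x)] (fun s => G s 0).
  have := @line_C0 _ _ _ _ _ HC _ _ _ _ [set s | U (s *: v + x)]
     (((((0, 0), 1), 0), 0) : tcar (XXK K Kopen ptop (XXK K Kopen ptop E)))
     ((((x, v), 0), ((w, 0), 0)), 0) MXXE HF Hf11c D2o.
  move=> Hl; apply: (c_ext HC MK HF (Hl _)).
    move=> t Ht; simp; split; split; simp => //; by rewrite addrC.
  by move=> t _; simp.
have H2c : C0 (Kmod Kopen) F [set s | U (s *: v + x)] (fun s => H s 0).
  have := @line_C0 _ _ _ _ _ HC _ _ _ _ [set s | U (s *: v + x)]
     ((0, 1) : tcar (XXK K Kopen ptop (XXK K Kopen ptop E)))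
     ((((x, w), 0), ((v, 0), 0)), 0) MXXE HF Hf11c D2o.
  move=> Hl; apply: (c_ext HC MK HF (Hl _)).
    move=> t Ht; simp; split; split; simp => //; by rewrite addrC.
  by move=> t _; simp.
have GH00 : G 0 0 = H 0 0.
  apply: (c_dense HC HF D2o G2c H2c).
    by move=> t Ht Hu; apply: S1 => //; rewrite addrC.
  by rewrite /= scale0r add0r.
have hwc : C0 (Kmod Kopen) F [set s | U (s *: v + x)] (fun t => hw ((x, v), t)).
  have := @line_C0 _ _ _ _ _ HC _ _ _ _ [set s | U (s *: v + x)]
     ((0, 1) : tcar (XXK K Kopen ptop E)) ((x, v), 0) MXE HF Hhwc D2o.
  move=> Hl; apply: (c_ext HC MK HF (Hl _)).
    move=> t Ht; simp; split; simp => //; by rewrite addrC.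
  by move=> t _; simp.
have hwH : hw ((x, v), 0) = H 0 0.
  apply: (c_dense HC HF D2o hwc H2c).
    move=> t Ht Hu; apply: (@scale_cancel _ _ t _ _ Hu).
    have Ht' : U (x + t *: v) by rewrite addrC.
    have e1 := Hhwe ((x, v), t) (conj Ux Ht').
    have e2 := Hf11 ((((x, w), 0), ((v, 0), 0)), t).
    rewrite /= in e1; rewrite -e1 /H -e2 /pder; simp => //.
    split; split; simp => //; by rewrite addrC.
  by rewrite /= scale0r add0r.
have hvc : C0 (Kmod Kopen) F (D1 0) (fun t => hv ((x, w), t)).
  have := @line_C0 _ _ _ _ _ HC _ _ _ _ (D1 0)
     ((0, 1) : tcar (XXK K Kopen ptop E)) ((x, w), 0) MXE HF Hhvc (D1o 0).
  move=> Hl; apply: (c_ext HC MK HF (Hl _)).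
    move=> t [Ht _]; simp; split; simp => //; by rewrite addrC.
  by move=> t _; simp.
have hvG : hv ((x, w), 0) = G 0 0.
  have U0 : U (x + 0 *: v) by rewrite scale0r addr0.
  apply: (c_dense HC HF (D1o 0) hvc (G1c 0 U0)).
    move=> t [Ht _] Hu; apply: (@scale_cancel _ _ t _ _ Hu).
    have Ht' : U (x + t *: w) by rewrite addrC.
    have e1 := Hhve ((x, w), t) (conj Ux Ht').
    have e2 := Hf11 ((((x, v), 0), ((w, 0), 0)), t).
    rewrite /= in e1; rewrite -e1 /G -e2 /pder; simp => //.
    split; split; simp => //; by rewrite addrC.
  by split; rewrite /= scale0r ?add0r ?addr0.
by rewrite /pder hwH hvG GH00.
Qed.
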